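(* Let $Y$ be a simplicial complex on $[n]$, let $\prec$ be a term order, and let $Y^c$ be any combinatorial shifting of $Y$. Then $Y^{\prec}\preceq Y^c$, i.e. for every $k$, either $(Y^{\prec})_k=(Y^c)_k$ or the $\prec$-minimal element of the symmetric difference $(Y^{\prec})_k\,\triangle\,(Y^c)_k$ belongs to $(Y^{\prec})_k$.
   Context: For a simplicial complex $K$ on $[n]$, $K_k$ denotes its set of $k$-element faces. Partial order on $k$-subsets: $\{s_1<\dots<s_k\}\le\{t_1<\dots<t_k\}$ iff $s_i\le t_i$ for all $i$; a term order $\prec$ is, for each $k$, a linear order on $\binom{[n]}{k}$ extending this partial order. Let $X=(x_{ij})$ be an $n\times n$ matrix of independent indeterminates over $\mathbb{Q}$, $C_k(X)$ its $k$-th compound matrix ($c_{S,T}=\det(x_{ij})_{i\in S,j\in T}$). For $\mathcal F\subseteq\binom{[n]}{k}$, the exterior shifting $\mathcal F^{\prec}$ is obtained by going through $\binom{[n]}{k}$ in increasing $\prec$ order and selecting $S$ iff the row of $C_k(X)$ indexed by $S$, restricted to the columns indexed by $\mathcal F$, is linearly independent of previously selected rows; $Y^{\prec}:=\bigcup_k (Y_k)^{\prec}$. A family $\mathcal F$ is shifted if for every $F\in\mathcal F$ and $i<j$ with $j\in F$, $i\notin F$, also $(F\setminus\{j\})\cup\{i\}\in\mathcal F$. For $i<j$, the operation $\mathrm{sh}_{ij}$ on a family $\mathcal F$ replaces each $F\in\mathcal F$ with $j\in F$, $i\notin F$ and $(F\setminus\{j\})\cup\{i\}\notin\mathcal F$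 by $(F\setminus\{j\})\cup\{i\}$, leaving the other members unchanged; applied to a complex it acts on all faces. A combinatorial shifting $Y^c$ is any complex obtained from $Y$ by applying a finite sequence of operations $\mathrm{sh}_{ij}$ ($i<j$) until a shifted complex is reached. *)

(* Defs.v *)
From HB Require Import structures.
From mathcomp Require Import all_boot all_order all_algebra.
From mathcomp Require Import fraction.
Set Implicit Arguments. Unset Strict Implicit. Unset Printing Implicit Defensive.
Import Order.TTheory GRing.Theory Num.Theory.

Fixpoint mpoly (m : nat) : idomainType :=
  if m is m'.+1 then ({poly mpoly m'} : idomainType) else (rat : idomainType).

Fixpoint mvar (m v : nat) : mpoly m :=
  if m is m'.+1 return mpoly m then
    (if v == m' then 'X%R else ((mvar m' v)%:P)%R : {poly mpoly m'})
  else 0%R.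

Definition ratfun (n : nat) : fieldType := {fraction mpoly (n * n)}.

(* X = (x_ij) : entry x_ij is the indeterminate number i*n+j, as a rational function *)
Definition xvar (n i j : nat) : ratfun n := tofrac (mvar (n * n) (i * n + j)).

Definition elems n (A : {set 'I_n}) : seq nat := sort leq [seq val i | i <- enum A].

Definition comp_le n (A B : {set 'I_n}) : bool := all2 leq (elems A) (elems B).

Definition ksets n (k : nat) : seq {set 'I_n} := filter (fun A : {set 'I_n} => #|A| == k) (enum [set: {set 'I_n}]).

Definition term_order n (le : nat -> rel {set 'I_n}) : Prop :=
  forall k,
  [/\ {in ksets n k, reflexive (le k)},
      {in ksets n k &, antisymmetric (le k)},
      {in ksets n k & &, transitive (le k)},
      {in ksets n k &, total (le k)} &
      {in ksets n k &, forall A B, comp_le A B -> le k A B}].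

Definition compound n k (A B : {set 'I_n}) : ratfun n :=
  \det (\matrix_(a < k, b < k) xvar n (nth 0%N (elems A) a) (nth 0%N (elems B) b)).

(* the row of C_k(X) indexed by A, restricted to the columns indexed by F *)
Definition crow n k (F : {set {set 'I_n}}) (A : {set 'I_n}) : 'rV[ratfun n]_#|F| :=
  \row_(j < #|F|) compound k A (enum_val j).

Definition crows n k (F : {set {set 'I_n}}) (acc : seq {set 'I_n})
  : 'M[ratfun n]_(size acc, #|F|) :=
  \matrix_(i < size acc) crow k F (nth set0 acc i).

Fixpoint greedy n k (F : {set {set 'I_n}}) (l acc : seq {set 'I_n}) : seq {set 'I_n} :=
  if l is A :: l' then
    if row_free (col_mx (crows k F acc) (crow k F A))
    then greedy k F l' (rcons acc A) else greedy k F l' acc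
  else acc.

Definition ext_shift_k n (le : nat -> rel {set 'I_n}) k (F : {set {set 'I_n}})
  : {set {set 'I_n}} :=
  [set A in greedy k F (sort (le k) (ksets n k)) [::]].

Definition level n (K : {set {set 'I_n}}) k : {set {set 'I_n}} :=
  [set A in K | #|A| == k].

Definition ext_shift n (le : nat -> rel {set 'I_n}) (Y : {set {set 'I_n}})
  : {set {set 'I_n}} :=
  \bigcup_(k < n.+1) ext_shift_k le k (level Y k).

Definition simplicial_complex n (K : {set {set 'I_n}}) : Prop :=
  forall A B : {set 'I_n}, A \in K -> B \subset A -> B \in K.

Definition shifted n (F : {set {set 'I_n}}) : Prop :=
  forall (A : {set 'I_n}) (i j : 'I_n), A \in F -> i < j -> j \in A -> i \notin A ->
    i |: (A :\ j) \in F.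

Definition sh n (i j : 'I_n) (F : {set {set 'I_n}}) : {set {set 'I_n}} :=
  [set (if [&& j \in A, i \notin A & i |: (A :\ j) \notin F] then i |: (A :\ j) else A)
  | A : {set 'I_n} in F].

Definition comb_shifting n (Y Yc : {set {set 'I_n}}) : Prop :=
  exists s : seq ('I_n * 'I_n),
    [/\ all (fun p : 'I_n * 'I_n => p.1 < p.2) s,
        Yc = foldl (fun F (p : 'I_n * 'I_n) => sh p.1 p.2 F) Y s &
        shifted Yc].

Definition prec_le_k n (le : nat -> rel {set 'I_n}) k (A B : {set {set 'I_n}}) : bool :=
  let D := (level A k :\: level B k) :|: (level B k :\: level A k) in
  (level A k == level B k) ||
  [exists U in D, [forall V in D, le k U V] && (U \in level A k)].

(* Main.v *)
Require Import Defs.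
From HB Require Import structures.
From mathcomp Require Import all_boot all_order all_algebra fraction zify.
From mathcomp Require Import fingroup perm.
Set Implicit Arguments. Unset Strict Implicit. Unset Printing Implicit Defensive.
Import Order.TTheory GRing.Theory Num.Theory.
Local Open Scope ring_scope.
Section Lead.
Variable R : comNzRingType.

Lemma coef_prod_lin (I : eqType) (r : seq I) (P : pred I) (c u : I -> R) :
  (forall a, ~~ P a -> u a = 0) ->
  (size ((\prod_(a <- r) ((c a)%:P + 'X * (u a)%:P))%R : {poly R}) <= (count P r).+1)%N /\
  (\prod_(a <- r) ((c a)%:P + 'X * (u a)%:P))`_(count P r) =
     \prod_(a <- r) (if P a then u a else c a).
Proof.
move=> Pu; elim: r => [|a r [IHs IHc]]; first by rewrite !big_nil size_poly1 coefC.
rewrite !big_cons /=; set q := \prod_(_ <- r) _.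
case Pa: (P a) => /=.
  split.
    apply: leq_trans (size_mul_leq _ _) _.
    have h2 : (size (((c a)%:P + 'X * (u a)%:P)%R) <= 2)%N.
      apply: leq_trans (size_polyD _ _) _; rewrite geq_max size_polyC (leq_trans (leq_b1 _)) //=.
      by rewrite mulrC mul_polyC (leq_trans (size_scale_leq _ _)) // size_polyX.
    move: h2 IHs; rewrite -/q; lia.
  rewrite mulrDl coefD coefCM -mulrA coefXM /= coefCM add0n IHc.
  by rewrite add1n nth_default ?mulr0 ?add0r // -/q.
rewrite add0n Pu ?Pa // mulr0 addr0 coefCM IHc; split => //.
have := size_mul_leq (c a)%:P q; rewrite size_polyC -/q; move: IHs; rewrite -/q.
case: (_ != 0) => /=; lia.
Qed.

Lemma det_lead N (C B : 'M[R]_N) (P : pred 'I_N) :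
  (forall a b, ~~ P a -> B a b = 0) ->
  (\det (map_mx polyC C + 'X *: map_mx polyC B))`_#|P| =
  \det (\matrix_(a, b) if P a then B a b else C a b).
Proof.
move=> PB; rewrite /determinant coef_sum; apply: eq_bigr => s _.
have -> : ((-1) ^+ odd_perm s : {poly R}) = ((-1) ^+ odd_perm s : R)%:P by rewrite rmorph_sign.
rewrite coefCM.
congr (_ * _).
have := @coef_prod_lin _ (index_enum 'I_N) P (fun a => C a (s a)) (fun a => B a (s a)).
case=> [a Pa|_]; first exact: PB.
have -> : #|P| = count P (index_enum 'I_N).
  by rewrite cardE /enum_mem size_filter /index_enum; congr count; rewrite unlock.
move=> H; rewrite (eq_bigr (fun a => if P a then B a (s a) else C a (s a))).
  rewrite -H; f_equal; rewrite (eq_bigr (fun a => (C a (s a))%:P + 'X * (B a (s a))%:P)) // => i _; rewrite !mxE.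
  by case: (P i) => //; rewrite (PB i (s i)) ?mulr0 ?addr0 // negbT.
by move=> i _; rewrite mxE.
Qed.
End Lead.
Lemma det_rowops (R : comNzRingType) N (A A0 : 'M[R]_N) (Q : pred 'I_N)
   (p : 'I_N -> 'I_N) (c : 'I_N -> R) :
 (forall a, Q a -> ~~ Q (p a)) ->
 (forall a, ~~ Q a -> row a A = row a A0) ->
 (forall a, Q a -> row a A = row a A0 + c a *: row (p a) A0) ->
 \det A = \det A0.
Proof.
have [m] := ubnP #|Q|; elim: m Q A => // m IH Q A ltQ HQp Hn Hq.
case: (pickP Q) => [a Qa|Q0]; last first.
  by congr (\det _); apply/row_matrixP => r; rewrite Hn // Q0.
have npa : p a != a by apply: contraNneq (HQp a Qa) => ->.
pose A1 := \matrix_(r, col) (if r == a then A0 r col else A r col).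
pose C := \matrix_(r, col) (if r == a then A0 (p a) col else A r col).
have -> : \det A = 1 * \det A1 + c a * \det C.
  apply: (@determinant_multilinear _ _ _ _ _ a).
  - rewrite Hq // scale1r; congr (_ + _ *: _); apply/rowP => col; rewrite !mxE ?eqxx //.
  - by apply/matrixP => r col; rewrite !mxE eq_sym (negPf (neq_lift a r)).
  - by apply/matrixP => r col; rewrite !mxE eq_sym (negPf (neq_lift a r)).
have -> : \det C = 0.
  apply: (@determinant_alternate _ _ C a (p a)); first by rewrite eq_sym.
  move=> col.
  rewrite !mxE eqxx (negPf npa).
  by have := congr1 (fun M : 'M_(1,N) => M ord0 col) (Hn _ (HQp a Qa)); rewrite !mxE.
rewrite mul1r mulr0 addr0.
apply: (IH [pred x | (x != a) && Q x]) => [|r /andP[_ Qr]|r|r /andP[nra Qr]].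
- move: ltQ; rewrite [X in (X < _)%N](cardD1 a) (_ : a \in Q = true) // add1n ltnS.
- by apply/negP => /andP[_]; apply/negP; exact: HQp.
- rewrite inE negb_and negbK; case: eqP => [->|nra] /= Qr.
    by apply/rowP => col; rewrite !mxE eqxx.
  by apply/rowP => col; rewrite !mxE (introF eqP nra); have := congr1 (fun M : 'M_(1,N) => M ord0 col) (Hn _ Qr); rewrite !mxE.
- apply/rowP => col; rewrite !mxE (negPf nra).
  by have := congr1 (fun M : 'M_(1,N) => M ord0 col) (Hq _ Qr); rewrite !mxE.
Qed.
Section Elems.
Variable n : nat.
Implicit Types (T : {set 'I_n}).

Lemma size_elems T : size (elems T) = #|T|.
Proof. by rewrite /elems size_sort size_map cardE. Qed.

Lemma uniq_elems T : uniq (elems T).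
Proof. by rewrite /elems sort_uniq map_inj_uniq ?enum_uniq //; exact: val_inj. Qed.

Lemma mem_elems T (i : 'I_n) : (val i \in elems T) = (i \in T).
Proof. by rewrite /elems mem_sort mem_map ?mem_enum //; exact: val_inj. Qed.

Lemma elems_lt T x : x \in elems T -> (x < n)%N.
Proof. by rewrite /elems mem_sort => /mapP[i _ ->]; exact: ltn_ord. Qed.

Lemma mem_elemsP T x : reflect (exists2 i : 'I_n, i \in T & x = val i) (x \in elems T).
Proof.
apply: (iffP idP); last by case=> i iT ->; rewrite mem_elems.
move=> xT; have lt := elems_lt xT; exists (Ordinal lt) => //; by rewrite -mem_elems.
Qed.

Lemma nth_elems T b : (b < #|T|)%N -> nth 0%N (elems T) b \in elems T.
Proof. by move=> lt; rewrite mem_nth ?size_elems. Qed.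
End Elems.

Definition minorf (R : comNzRingType) n (f : nat -> nat -> R) k (S T : {set 'I_n}) : R :=
  \det (\matrix_(a < k, b < k) f (nth 0%N (elems S) a) (nth 0%N (elems T) b)).

Definition fstep (R : comNzRingType) (f : nat -> nat -> R) (i j : nat) : nat -> nat -> {poly R} :=
  fun r c => (f r c)%:P + (if c == j then 'X * (f r i)%:P else 0).

Lemma minorf_lift (R : comNzRingType) n (f : nat -> nat -> R) k (S T : {set 'I_n}) :
  minorf (fun r c => (f r c)%:P) k S T = (minorf f k S T)%:P.
Proof. by rewrite /minorf -det_map_mx; congr (\det _); apply/matrixP => a b; rewrite !mxE. Qed.

Section Step.
Variables (R : comNzRingType) (n : nat) (f : nat -> nat -> R) (k : nat) (i j : 'I_n).

Definition sw (x : nat) : nat := if x == val j then val i else x.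

Lemma nth_eqj (T : {set 'I_n}) (b : nat) : (b < #|T|)%N ->
  (nth 0%N (elems T) b == val j) = (b == index (val j) (elems T)).
Proof.
move=> lt; apply/eqP/eqP => [<-|eb]; first by rewrite index_uniq ?uniq_elems ?size_elems.
by rewrite eb in lt *; rewrite nth_index // -index_mem size_elems.
Qed.

Lemma minor_step_triv (S T : {set 'I_n}) : #|T| = k -> j \notin T ->
  minorf (fstep f i j) k S T = (minorf f k S T)%:P.
Proof.
move=> Tk jT; rewrite -minorf_lift; congr (\det _); apply/matrixP => a b; rewrite !mxE /fstep.
case: eqP => [e|]; last by rewrite addr0.
have := nth_elems (T := T) (b := b); rewrite Tk ltn_ord e mem_elems => /(_ isT) jT'.
by rewrite jT' in jT.
Qed.

Definition M2 (S T : {set 'I_n}) : 'M[R]_k :=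
  \matrix_(a < k, b < k) f (nth 0%N (elems S) a) (sw (nth 0%N (elems T) b)).

Lemma minor_step_main (S T : {set 'I_n}) : #|T| = k -> j \in T ->
  minorf (fstep f i j) k S T = (minorf f k S T)%:P + 'X * (\det (M2 S T))%:P.
Proof.
move=> Tk jT.
have jmem : val j \in elems T by rewrite mem_elems.
have b0lt : (index (val j) (elems T) < k)%N by rewrite -Tk -size_elems index_mem.
pose b0 : 'I_k := Ordinal b0lt.
have eqj (b : 'I_k) : (nth 0%N (elems T) b == val j) = (b == b0).
  by rewrite nth_eqj ?Tk.
rewrite /minorf -det_tr.
rewrite (@determinant_multilinear _ _ _ (map_mx polyC (\matrix_(a < k, b < k) f (nth 0%N (elems S) a) (nth 0%N (elems T) b)))^T
   (map_mx polyC (M2 S T))^T b0 1 'X); first by rewrite !det_tr !det_map_mx mul1r.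
- apply/rowP => a; rewrite !mxE /fstep /sw.
  have /eqP -> : nth 0%N (elems T) b0 == val j by rewrite eqj.
  by rewrite eqxx mul1r.
- apply/matrixP => r a; rewrite !mxE /fstep.
  have /negPf -> : nth 0%N (elems T) (lift b0 r) != val j by rewrite eqj eq_sym neq_lift.
  by rewrite addr0.
- apply/matrixP => r a; rewrite !mxE /fstep /sw.
  have /negPf -> : nth 0%N (elems T) (lift b0 r) != val j by rewrite eqj eq_sym neq_lift.
  by rewrite addr0.
Qed.

Lemma M2_both (S T : {set 'I_n}) : #|T| = k -> i \in T -> j \in T -> i != j ->
  \det (M2 S T) = 0.
Proof.
move=> Tk iT jT nij.
have b0lt : (index (val j) (elems T) < k)%N by rewrite -Tk -size_elems index_mem mem_elems.
have b1lt : (index (val i) (elems T) < k)%N by rewrite -Tk -size_elems index_mem mem_elems.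
rewrite -det_tr; apply: (@determinant_alternate _ _ _ (Ordinal b0lt) (Ordinal b1lt)).
  rewrite -val_eqE /=; apply/negP => /eqP/(congr1 (nth 0%N (elems T))).
  by rewrite !nth_index ?mem_elems // => /val_inj/eqP; rewrite eq_sym (negPf nij).
move=> a; rewrite !mxE /sw !nth_index ?mem_elems // eqxx.
by case: eqP => // /val_inj e; rewrite e eqxx in nij.
Qed.

Lemma M2_perm (T : {set 'I_n}) : #|T| = k -> i \notin T -> j \in T ->
  exists b : bool, forall S : {set 'I_n},
    \det (M2 S T) = (-1) ^+ b * minorf f k S (i |: (T :\ j)).
Proof.
move=> Tk iT jT; set T' := i |: (T :\ j).
have T'k : #|T'| = k.
  rewrite cardsU1 !inE (negPf iT) andbF /= add1n -Tk (cardsD1 j T) jT.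
  by [].
have swin (b : 'I_k) : sw (nth 0%N (elems T) b) \in elems T'.
  have := nth_elems (T := T) (b := b); rewrite Tk ltn_ord => /(_ isT) /mem_elemsP[x xT ->].
  rewrite /sw val_eqE; case: eqP => [_|nx]; first by rewrite mem_elems !inE eqxx.
  by rewrite mem_elems !inE xT andbT; apply/orP; right; apply/eqP.
have glt (b : 'I_k) : (index (sw (nth 0%N (elems T) b)) (elems T') < k)%N.
  by rewrite [X in (_ < X)%N](esym T'k) -size_elems index_mem.
pose g (b : 'I_k) : 'I_k := Ordinal (glt b).
have ginj : injective g.
  move=> b b' /(congr1 val) /= /(congr1 (nth 0%N (elems T'))).
  rewrite !nth_index // /sw.
  have hb := nth_elems (T := T) (b := b); have hb' := nth_elems (T := T) (b := b').
  rewrite Tk !ltn_ord in hb hb'; move: (hb isT) (hb' isT) => mb mb'.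
  have iNe : val i \notin elems T by rewrite mem_elems.
  have neq x : x \in elems T -> x != val i by apply: contraTneq => ->.
  move=> e; apply/val_inj/eqP; rewrite -(nth_uniq 0%N _ _ (uniq_elems T)) ?size_elems ?Tk ?ltn_ord //.
  apply/eqP; move: e.
  case: eqP => [->|nj]; case: eqP => [->|nj'] //.
    by move=> e; move: (neq _ mb'); rewrite -e eqxx.
  by move=> e; move: (neq _ mb); rewrite e eqxx.
pose sg := perm ginj.
exists (odd_perm sg^-1)%g => S.
have -> : M2 S T = col_perm sg (\matrix_(a < k, b < k) f (nth 0%N (elems S) a) (nth 0%N (elems T') b)).
  by apply/matrixP => a b; rewrite !mxE permE /= nth_index.
by rewrite col_permE det_mulmx det_perm mulrC.
Qed.
End Step.
Fixpoint cstm (p : nat) : {rmorphism rat -> mpoly p} :=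
  if p is p'.+1 return {rmorphism rat -> mpoly p} then
     ((@polyC (mpoly p')) \o cstm p')%FUN : {rmorphism rat -> {poly mpoly p'}}
  else idfun.
Fixpoint evm (p m : nat) (g : nat -> mpoly p) : {rmorphism mpoly m -> mpoly p} :=
  if m is m'.+1 return {rmorphism mpoly m -> mpoly p} then
     @horner_morph _ _ (evm m' g) (g m') (fun a => mulrC _ _)
  else cstm p.
Lemma evm_var p m (g : nat -> mpoly p) v : (v < m)%N -> evm m g (mvar m v) = g v.
Proof.
elim: m => // m IH; rewrite ltnS leq_eqVlt => /orP[/eqP->|lt].
  by rewrite /= eqxx horner_morphX.
rewrite /= ifN ?horner_morphC ?IH //; by rewrite neq_ltn lt.
Qed.

Lemma det_row0 (R : comNzRingType) N (A : 'M[R]_N) a : (forall b, A a b = 0) -> \det A = 0.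
Proof. by move=> h; rewrite (expand_det_row _ a) big1 // => b _; rewrite h mul0r. Qed.

Lemma minor_id n k (S T : {set 'I_n}) : #|S| = k -> #|T| = k ->
  minorf (fun r c : nat => ((r == c)%:R : rat)) k S T = (S == T)%:R.
Proof.
move=> Sk Tk; case: eqP => [<-|nST].
  rewrite /minorf -[RHS](det1 _ k); congr (\det _); apply/matrixP => a b; rewrite !mxE.
  by rewrite nth_uniq ?uniq_elems ?size_elems ?Sk.
have [x xS xT] : exists2 x, x \in S & x \notin T.
  apply/exists_inP; apply: contraNT (introN eqP nST); rewrite negb_exists_in => /forall_inP h.
  apply/eqP/eqP; rewrite eqEcard Sk Tk leqnn andbT; apply/subsetP => x xS.
  by have := h x xS; rewrite negbK.
have a0lt : (index (val x) (elems S) < k)%N by rewrite -Sk -size_elems index_mem mem_elems.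
apply: (@det_row0 _ _ _ (Ordinal a0lt)) => b; rewrite !mxE nth_index ?mem_elems //.
case: eqP => // e; have := nth_elems (T := T) (b := b); rewrite Tk ltn_ord -e mem_elems.
by move=> /(_ isT) xT'; rewrite xT' in xT.
Qed.

Section Shmap.
Variables (n : nat) (i j : 'I_n) (F : {set {set 'I_n}}).

Definition shmap (A : {set 'I_n}) : {set 'I_n} :=
  if [&& j \in A, i \notin A & i |: (A :\ j) \notin F] then i |: (A :\ j) else A.

Lemma card_shmap A : #|shmap A| = #|A|.
Proof.
rewrite /shmap; case: and3P => // [[jA iA _]].
by rewrite cardsU1 !inE (negPf iA) andbF add1n (cardsD1 j A) jA.
Qed.

Lemma swap_inj (A B : {set 'I_n}) : j \in A -> i \notin A -> j \in B -> i \notin B ->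
  i |: (A :\ j) = i |: (B :\ j) -> A = B.
Proof.
move=> jA iA jB iB e; apply/setP => x.
have := congr1 (fun C : {set 'I_n} => x \in C) e; rewrite !inE /=.
case: (eqVneq x j) => [->|nxj]; first by rewrite jA jB.
case: (eqVneq x i) => [->|nxi] /=; last by [].
by rewrite (negPf iA) (negPf iB).
Qed.

Lemma shmap_inj : {in F &, injective shmap}.
Proof.
move=> A B AF BF; rewrite /shmap.
case: and3P => [[jA iA nA]|nA]; case: and3P => [[jB iB nB]|nB] //.
- exact: swap_inj.
- by move=> e; rewrite e BF in nA.
- by move=> e; rewrite -e AF in nB.
Qed.
End Shmap.

Fixpoint shs n (s : seq ('I_n * 'I_n)) (fs : seq {set 'I_n}) : seq {set 'I_n} :=
  if s is p :: s' then shs s' (map (shmap p.1 p.2 [set x in fs]) fs) else fs.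

Lemma main_alg n k (s : seq ('I_n * 'I_n)) : all (fun p => p.1 != p.2) s ->
  forall fs : seq {set 'I_n}, uniq fs -> all (fun A : {set 'I_n} => #|A| == k) fs ->
  forall N, size fs = N ->
  exists m (f : nat -> nat -> mpoly m),
    \det (\matrix_(a < N, b < N) minorf f k (nth (set0 : {set 'I_n}) (shs s fs) b) (nth (set0 : {set 'I_n}) fs a)) != 0.
Proof.
elim: s => [|[i j] s IH] /= => [_|/andP[nij hs]] fs ufs cfs N sN.
  have Tk (a : 'I_N) : #|nth (set0 : {set 'I_n}) fs a| = k.
    by apply/eqP/(allP cfs)/mem_nth; rewrite sN.
  exists 0%N, (fun r c => ((r == c)%:R : rat)).
  rewrite (_ : \matrix_(a < N, b < N) _ = 1%:M) ?det1 ?oner_neq0 //.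
  apply/matrixP => a b; rewrite !mxE minor_id // nth_uniq ?sN //.
  by rewrite eq_sym.
set Fs := [set x in fs]; set fs' := map (shmap i j Fs) fs.
have Tk (a : 'I_N) : #|nth (set0 : {set 'I_n}) fs a| = k.
  by apply/eqP/(allP cfs)/mem_nth; rewrite sN.
have ufs' : uniq fs'.
  by rewrite map_inj_in_uniq // => A B hA hB; apply: shmap_inj; rewrite inE.
have cfs' : all (fun A : {set 'I_n} => #|A| == k) fs'.
  by apply/allP => A /mapP[B hB ->]; rewrite card_shmap; exact: (allP cfs).
have sN' : size fs' = N by rewrite size_map.
have [m [f hf]] := IH hs fs' ufs' cfs' N sN'.
set gs := shs s fs' in hf *.
exists m.+1, (fstep f i j).
set T := fun a : 'I_N => nth (set0 : {set 'I_n}) fs a.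
have [eb heb] : exists eb : 'I_N -> bool, forall a, j \in T a -> i \notin T a ->
    forall S, \det (M2 f k i j S (T a)) = (-1) ^+ eb a * minorf f k S (i |: (T a :\ j)).
  apply: (@fin_all_exists _ (fun _ => bool) (fun a (b : bool) => j \in T a -> i \notin T a ->
    forall S, \det (M2 f k i j S (T a)) = (-1) ^+ b * minorf f k S (i |: (T a :\ j)))).
  move=> a; case: (boolP (j \in T a)) => jT; last by exists false.
  case: (boolP (i \in T a)) => iT; first by exists false.
  have [b hb] := M2_perm f (Tk a) iT jT; by exists b.
have hA a S : minorf (fstep f i j) k S (T a) = (minorf f k S (T a))%:P +
    (if (j \in T a) && (i \notin T a) then
       'X * ((-1) ^+ eb a * minorf f k S (i |: (T a :\ j)))%:P else 0).
  case: (boolP (j \in T a)) => jT /=; first last.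
    by rewrite minor_step_triv ?addr0 ?Tk.
  rewrite (minor_step_main _ _ _ (Tk a) jT).
  case: (boolP (i \in T a)) => iT /=; first by rewrite M2_both ?mulr0 ?addr0.
  by rewrite heb.
pose U2 a := [&& j \in T a, i \notin T a & i |: (T a :\ j) \in Fs].
pose Mv a := [&& j \in T a, i \notin T a & i |: (T a :\ j) \notin Fs].
have [p hp] : exists p : 'I_N -> 'I_N, forall a, U2 a -> T (p a) = i |: (T a :\ j).
  apply: (@fin_all_exists _ (fun _ => 'I_N) (fun a (a' : 'I_N) => U2 a -> T a' = i |: (T a :\ j))).
  move=> a; case: (boolP (U2 a)) => [/and3P[_ _ h]|_]; last by exists a.
  rewrite inE in h.
  have lt : (index (i |: (T a :\ j)) fs < N)%N by rewrite -sN index_mem.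
  by exists (Ordinal lt) => _; rewrite /T nth_index.
set G := fun b : 'I_N => nth (set0 : {set 'I_n}) gs b.
pose C := \matrix_(a < N, b < N) minorf f k (G b) (T a).
pose B := \matrix_(a < N, b < N) (if Mv a then (-1) ^+ eb a * minorf f k (G b) (i |: (T a :\ j)) else 0).
have eA : \det (\matrix_(a < N, b < N) minorf (fstep f i j) k (G b) (T a)) =
          \det (map_mx polyC C + 'X *: map_mx polyC B).
  apply: (@det_rowops _ _ _ _ U2 p (fun a => 'X * ((-1) ^+ eb a)%:P)).
  - move=> a hU; apply/negP => /and3P[_ iT' _]; move: iT'.
    by rewrite hp // !inE eqxx.
  - move=> a nU; apply/rowP => b; rewrite !mxE hA /Mv.
    case: (boolP (j \in T a)) => jT /=; last by rewrite polyC0 mulr0.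
    case: (boolP (i \in T a)) => iT /=; first by rewrite polyC0 mulr0.
    by have -> : (i |: T a :\ j \notin Fs) by move: nU; rewrite /U2 jT iT.
  - move=> a hU; apply/rowP => b; rewrite !mxE hA /Mv.
    move: (hU); rewrite /U2 => /and3P[-> -> hF] /=.
    rewrite hp // setU11 andbF /= hF /= polyC0 !mulr0 !addr0.
    by rewrite polyCM mulrA.
have -> : \matrix_(a < N, b < N) minorf (fstep f i j) k (nth set0 gs b) (nth set0 fs a)
   = \matrix_(a < N, b < N) minorf (fstep f i j) k (G b) (T a) by [].
rewrite eA.
have PB a b : ~~ Mv a -> B a b = 0 by move=> h; rewrite mxE (negPf h).
have hc := det_lead C PB.
have eD : \matrix_(a, b) (if Mv a then B a b else C a b) =
    diag_mx (\row_a (if Mv a then (-1) ^+ eb a else 1)) *m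
      \matrix_(a < N, b < N) minorf f k (nth set0 gs b) (nth set0 fs' a).
  apply/matrixP => a b; rewrite mul_diag_mx !mxE (nth_map set0) ?sN // /shmap.
  rewrite -/(T a); rewrite /Mv; case: ifP => h; rewrite ?h ?mul1r //.
apply/eqP => h0; move: hc; rewrite h0 coef0 eD det_mulmx det_diag => /esym/eqP.
apply/negP; rewrite mulf_neq0 //; apply/prodf_neq0 => a _; rewrite mxE.
by case: (Mv a); rewrite ?signr_eq0 ?oner_eq0.
Qed.

Lemma minorf_map (R S : comNzRingType) (phi : {rmorphism R -> S}) n (g : nat -> nat -> R) k
   (A B : {set 'I_n}) :
  minorf (fun r c => phi (g r c)) k A B = phi (minorf g k A B).
Proof. by rewrite /minorf -det_map_mx; congr (\det _); apply/matrixP => a b; rewrite !mxE. Qed.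

Lemma minorf_eq (R : comNzRingType) n (g1 g2 : nat -> nat -> R) k (A B : {set 'I_n}) :
  (forall r c, (r < n)%N -> (c < n)%N -> g1 r c = g2 r c) -> #|A| = k -> #|B| = k ->
  minorf g1 k A B = minorf g2 k A B.
Proof.
move=> h Ak Bk; rewrite /minorf; congr (\det _); apply/matrixP => a b; rewrite !mxE h //.
  by apply: (@elems_lt _ A); apply: nth_elems; rewrite Ak.
by apply: (@elems_lt _ B); apply: nth_elems; rewrite Bk.
Qed.

Lemma size_shs n (s : seq ('I_n * 'I_n)) fs : size (shs s fs) = size fs.
Proof. by elim: s fs => //= p s IH fs; rewrite IH size_map. Qed.

Lemma cards_shs n k (s : seq ('I_n * 'I_n)) fs :
  all (fun A : {set 'I_n} => #|A| == k) fs -> all (fun A : {set 'I_n} => #|A| == k) (shs s fs).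
Proof.
elim: s fs => //= p s IH fs h; apply: IH.
by apply/allP => A /mapP[B hB ->]; rewrite card_shmap; exact: (allP h).
Qed.

Lemma uniq_shs n (s : seq ('I_n * 'I_n)) fs : uniq fs -> uniq (shs s fs).
Proof.
elim: s fs => //= p s IH fs h; apply: IH.
by rewrite map_inj_in_uniq // => A B hA hB; apply: shmap_inj; rewrite inE.
Qed.

Lemma gen_nonsing n k (s : seq ('I_n * 'I_n)) (fs : seq {set 'I_n}) N :
  all (fun p => p.1 != p.2) s -> uniq fs -> all (fun A : {set 'I_n} => #|A| == k) fs ->
  size fs = N ->
  \det (\matrix_(a < N, b < N) compound k (nth set0 (shs s fs) a) (nth set0 fs b)) != 0.
Proof.
move=> hs ufs cfs sN.
have [m [f hf]] := main_alg hs ufs cfs sN.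
pose mv := fun r c : nat => mvar (n * n) (r * n + c).
pose P0 := \matrix_(a < N, b < N) minorf mv k (nth set0 (shs s fs) a) (nth set0 fs b).
have -> : \matrix_(a < N, b < N) compound k (nth set0 (shs s fs) a) (nth set0 fs b)
    = map_mx (@tofrac _) P0.
  apply/matrixP => a b; rewrite !mxE /compound.
  exact: (@minorf_map _ _ (@tofrac (mpoly (n * n))) n mv k _ _).

rewrite det_map_mx tofrac_eq0; apply: contraNneq hf => h0.
pose g := fun v : nat => f (v %/ n)%N (v %% n)%N.
have := congr1 (evm (n * n) g) h0; rewrite rmorph0 -det_map_mx => <-.
rewrite -det_tr; apply/eqP; congr (\det _); apply/matrixP => a b; rewrite !mxE.
rewrite -minorf_map; apply: minorf_eq.
- move=> r c rn cn; rewrite evm_var /g.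
    by rewrite divnMDl ?(divn_small cn) ?addn0 ?modnMDl ?modn_small //; lia.
  by have : (r * n + c < n * n)%N by nia.
- have := cards_shs s cfs => /allP h; apply/eqP/h/mem_nth; rewrite size_shs sN //.
- by apply/eqP/(allP cfs)/mem_nth; rewrite sN.
Qed.

Section Lev.
Variables (n : nat).
Implicit Types (F : {set {set 'I_n}}) (i j : 'I_n).

Lemma shE i j F : sh i j F = [set shmap i j F A | A in F].
Proof. by []. Qed.

Lemma card_swap i j (B : {set 'I_n}) : j \in B -> i \notin B -> #|i |: (B :\ j)| = #|B|.
Proof. by move=> jB iB; rewrite cardsU1 !inE (negPf iB) andbF add1n (cardsD1 j B) jB. Qed.

Lemma shmap_level i j F k (B : {set 'I_n}) : #|B| = k -> shmap i j F B = shmap i j (level F k) B.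
Proof.
move=> Bk; rewrite /shmap; case: (boolP (j \in B)) => //= jB; case: (boolP (i \in B)) => //= iB.
by rewrite /level inE card_swap // Bk eqxx andbT.
Qed.

Lemma level_sh i j F k : level (sh i j F) k = sh i j (level F k).
Proof.
apply/setP => A; rewrite !shE inE; apply/andP/imsetP => [[/imsetP[B BF ->] cB]|[B]].
  have Bk : #|B| = k by move/eqP: cB; rewrite card_shmap.
  by exists B; rewrite ?inE ?BF ?Bk ?eqxx // -shmap_level.
rewrite inE => /andP[BF /eqP Bk] ->; rewrite -shmap_level // card_shmap Bk eqxx.
by split => //; apply/imsetP; exists B.
Qed.

Lemma level_foldl (s : seq ('I_n * 'I_n)) F k :
  level (foldl (fun F (p : 'I_n * 'I_n) => sh p.1 p.2 F) F s) k =
  foldl (fun F (p : 'I_n * 'I_n) => sh p.1 p.2 F) (level F k) s.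
Proof. by elim: s F => //= p s IH F; rewrite IH level_sh. Qed.

Lemma shs_set (s : seq ('I_n * 'I_n)) fs :
  [set x in shs s fs] = foldl (fun F (p : 'I_n * 'I_n) => sh p.1 p.2 F) [set x in fs] s.
Proof.
elim: s fs => //= p s IH fs; rewrite IH; congr foldl.
apply/setP => x; rewrite shE inE; apply/mapP/imsetP => [[A hA ->]|[A hA ->]].
  by exists A; rewrite ?inE.
by exists A; rewrite -?(in_set (fun x => x \in fs)).
Qed.
End Lev.

Section Greedy.
Variables (n k : nat) (F : {set {set 'I_n}}).

Lemma greedy_cat (l1 l2 acc : seq {set 'I_n}) :
  greedy k F (l1 ++ l2) acc = greedy k F l2 (greedy k F l1 acc).
Proof. by elim: l1 acc => //= A l1 IH acc; case: ifP. Qed.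

Lemma greedy_ext (l acc : seq {set 'I_n}) :
  exists2 s, greedy k F l acc = acc ++ s & subseq s l.
Proof.
elim: l acc => [|A l IH] acc /=; first by exists [::]; rewrite ?cats0.
case: ifP => _.
  have [s -> hs] := IH (rcons acc A); exists (A :: s); first by rewrite cat_rcons.
  by rewrite /= eqxx.
have [s -> hs] := IH acc; exists s => //.
exact: (subseq_trans hs (subseq_cons l A)).
Qed.
End Greedy.

Lemma rowsub_free (K : fieldType) m N (M : 'M[K]_(m, N)) (Nsq : 'M[K]_N) (phi : 'I_m -> 'I_N) :
  injective phi -> (forall r, row r M = row (phi r) Nsq) -> row_free Nsq -> row_free M.
Proof.
move=> phi_inj hr fN.
pose P := \matrix_(r < m, c < N) ((phi r == c)%:R : K).
have -> : M = P *m Nsq.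
  apply/row_matrixP => r; rewrite hr row_mul; apply/rowP => c; rewrite !mxE.
  rewrite (bigD1 (phi r)) //= big1 ?addr0 => [|c' nc']; first by rewrite !mxE eqxx mul1r.
  by rewrite !mxE eq_sym (negPf nc') mul0r.
rewrite /row_free mxrankMfree //.
have e : P *m P^T = 1%:M.
  apply/matrixP => r r'; rewrite !mxE (bigD1 (phi r)) //= big1 ?addr0 => [|c nc].
    by rewrite !mxE eqxx mul1r (inj_eq phi_inj) eq_sym.
  by rewrite !mxE eq_sym (negPf nc) mul0r.
rewrite eqn_leq rank_leq_row /=.
by have := mxrankM_maxl P P^T; rewrite e mxrank1.
Qed.

Lemma level_big n (X : {set {set 'I_n}}) k : (n < k)%N -> level X k = set0.
Proof.
move=> nk; apply/setP => A; rewrite !inE; apply/negbTE; rewrite negb_and; apply/orP; right.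
apply: contraTneq nk => <-; rewrite -leqNgt; apply: leq_trans (max_card _) _.
by rewrite card_ord.
Qed.

Lemma greedy_card n (le : nat -> rel {set 'I_n}) k (F : {set {set 'I_n}}) A :
  A \in greedy k F (sort (le k) (ksets n k)) [::] -> #|A| = k.
Proof.
have [s -> hs] := greedy_ext k F (sort (le k) (ksets n k)) [::].
move=> /(mem_subseq hs); rewrite mem_sort mem_filter => /andP[/eqP -> _] //.
Qed.

Lemma level_ext n (le : nat -> rel {set 'I_n}) (Y : {set {set 'I_n}}) k : (k <= n)%N ->
  level (ext_shift le Y) k = [set A in greedy k (level Y k) (sort (le k) (ksets n k)) [::]].
Proof.
move=> kn; apply/setP => A; rewrite /level /ext_shift !inE; apply/andP/idP.
  case=> /bigcupP[k' _]; rewrite inE => hA /eqP Ak.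
  have := greedy_card hA; rewrite Ak => e.
  by move: hA; rewrite -e.
move=> hA; split; last by rewrite (greedy_card hA).
have kn' : (k < n.+1)%N by [].
by apply/bigcupP; exists (Ordinal kn') => //; rewrite inE.
Qed.

Theorem mainTheorem5 (n : nat) (Y Yc : {set {set 'I_n}})
  (le : nat -> rel {set 'I_n}) :
  simplicial_complex Y -> term_order le -> comb_shifting Y Yc ->
  forall k : nat, prec_le_k le k (ext_shift le Y) Yc.
Proof.
move=> _ Hto [s [hs eYc _]] k.
rewrite /prec_le_k.
set E := level (ext_shift le Y) k; set G := level Yc k.
case: (eqVneq E G) => [eEG|nEG]; first by apply/orP; left; apply/eqP.
apply/orP; right.
have kn : (k <= n)%N.
  rewrite leqNgt; apply: contra_neqN nEG => nk.
  by rewrite /E /G !level_big.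
have [leR leA leT leTot leC] := Hto k.
set F := level Y k.
set L := sort (le k) (ksets n k).
have hE : E = [set A in greedy k F L [::]] by rewrite /E level_ext.
have uL : uniq L by rewrite sort_uniq filter_uniq ?enum_uniq.
have memL A : (A \in L) = (#|A| == k).
  by rewrite mem_sort mem_filter mem_enum in_setT andbT.
have allL : all (fun X => X \in ksets n k) L by apply/allP => X; rewrite mem_sort.
have sortL : sorted (le k) L by apply: (sort_sorted_in leTot); apply/allP.
set D := (E :\: G) :|: (G :\: E).
have cE A : A \in E -> #|A| = k by rewrite hE inE => /greedy_card.
have cG A : A \in G -> #|A| = k by rewrite inE => /andP[_ /eqP].
have DL A : A \in D -> A \in L.
  by rewrite memL => /setUP[/setDP[h _]|/setDP[h _]]; apply/eqP; [exact: cE|exact: cG].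
have hasD : has (fun A => A \in D) L.
  have [A AD] : exists A, A \in D.
    apply/set0Pn; apply: contra_neq nEG => D0; apply/setP => A.
    have := congr1 (fun X : {set {set 'I_n}} => A \in X) D0.
    by rewrite in_set0 in_setU !in_setD; case: (A \in E); case: (A \in G).
  by apply/hasP; exists A => //; exact: DL.
set p := find (fun A => A \in D) L.
have pL : (p < size L)%N by rewrite -has_find.
set U := nth set0 L p.
have UD : U \in D by exact: (nth_find set0 hasD).
have l1D q : (q < p)%N -> nth set0 L q \notin D by move=> qp; rewrite (before_find set0 qp).
apply/exists_inP; exists U => //; apply/andP; split.
  apply/forall_inP => V VD.
  have qL : (index V L < size L)%N by rewrite index_mem DL.
  have eV : nth set0 L (index V L) = V by rewrite nth_index ?DL.
  case: (ltngtP (index V L) p) => [qp|pq|qp].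
  - by move: (l1D _ qp); rewrite eV VD.
  - by rewrite -eV; apply: (sorted_ltn_nth_in leT set0 allL sortL).
  - by rewrite /U -qp eV; apply: leR; have := DL _ VD; rewrite mem_sort.
apply/negPn/negP => UE.
have UG : U \in G.
  by move: UD; rewrite in_setU !in_setD (negPf UE) /= andbF.
set l1 := take p L; set l2 := drop p.+1 L.
have eL : L = l1 ++ U :: l2 by rewrite /l1 /l2 /U -drop_nth // cat_take_drop.
set acc := greedy k F l1 [::].
have [s1 eacc sub1] := greedy_ext k F l1 [::].
rewrite cat0s in eacc.
have l1nD V : V \in l1 -> V \notin D.
  move=> Vl1; have : (index V l1 < size l1)%N by rewrite index_mem.
  rewrite size_take pL => ip; have := l1D _ ip.
  by rewrite -(nth_take _ ip) nth_index.
have gL : greedy k F L [::] = greedy k F (U :: l2) acc by rewrite {1}eL greedy_cat.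
have accE V : V \in acc -> V \in E.
  move=> Va; rewrite hE inE gL /=; case: ifP => _.
    by have [s2 -> _] := greedy_ext k F l2 (rcons acc U); rewrite mem_cat mem_rcons inE Va orbT.
  by have [s2 -> _] := greedy_ext k F l2 acc; rewrite mem_cat Va.
have accG V : V \in acc -> V \in G.
  move=> Va; have VE := accE V Va.
  have Vl1 : V \in l1 by rewrite (mem_subseq sub1) // -eacc.
  by have := l1nD V Vl1; rewrite in_setU !in_setD VE /=; case: (V \in G).
set gs := shs s (enum F).
have hs' : all (fun q : 'I_n * 'I_n => q.1 != q.2) s.
  by apply/allP => q qs; have := allP hs q qs; rewrite neq_ltn => ->.
have cF : all (fun A : {set 'I_n} => #|A| == k) (enum F).
  by apply/allP => A; rewrite mem_enum inE => /andP[_].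
have sF : size (enum F) = #|F| by rewrite cardE.
have Gs : [set x in gs] = G by rewrite /gs shs_set set_enum /G eYc level_foldl.
pose Nsq := \matrix_(a < #|F|, b < #|F|) compound k (nth set0 gs a) (nth set0 (enum F) b).
have fN : row_free Nsq.
  by rewrite row_free_unit unitmxE unitfE gen_nonsing ?enum_uniq.
have sgs : size gs = #|F| by rewrite size_shs.
set rs := rcons acc U.
have uacc : uniq acc by rewrite /acc eacc (subseq_uniq sub1) // take_uniq.
have Uacc : U \notin acc.
  apply/negP => Ua; have Ul1 : U \in l1 by rewrite (mem_subseq sub1) // -eacc.
  by have := l1nD U Ul1; rewrite UD.
have urs : uniq rs by rewrite rcons_uniq Uacc uacc.
have srs : size rs = (size acc + 1)%N by rewrite size_rcons addn1.
have rsG r : (r < size rs)%N -> nth set0 rs r \in G.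
  move=> lt; have := mem_nth set0 lt; rewrite mem_rcons inE => /orP[/eqP->//|]; exact: accG.
have [phi hphi] : exists phi : 'I_(size acc + 1) -> 'I_#|F|,
    forall r, nth set0 gs (phi r) = nth set0 rs r.
  apply: (@fin_all_exists _ (fun _ => 'I_#|F|) (fun (r : 'I_(size acc + 1)) (c : 'I_#|F|) => nth set0 gs c = nth set0 rs r)) => r.
  have lt : (r < size rs)%N by rewrite srs.
  have : nth set0 rs r \in gs by have := rsG r lt; rewrite -Gs inE.
  rewrite -index_mem sgs => ilt.
  by exists (Ordinal ilt); rewrite nth_index // -index_mem sgs.
have phi_inj : injective phi.
  move=> r r' e; have := hphi r; rewrite e hphi => /eqP.
  by rewrite nth_uniq ?srs // => /eqP/val_inj.
have hrow r : row r (col_mx (crows k F acc) (crow k F U)) = row (phi r) Nsq.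
  transitivity (crow k F (nth set0 rs r)).
    case: (splitP r) => [i ei|i ei].
      have -> : r = lshift 1 i by apply/val_inj.
      by rewrite rowKu /crows rowK /rs nth_rcons /= ltn_ord.
    have -> : r = rshift (size acc) i by apply/val_inj.
    rewrite rowKd /rs nth_rcons /= ord1 addn0 ltnn eqxx.
    by apply/rowP => c; rewrite !mxE.
  rewrite -hphi; apply/rowP => c; rewrite !mxE (enum_val_nth set0).
  done.
have RF := rowsub_free phi_inj hrow fN.
move/negP: UE; apply; rewrite hE inE gL /= RF.
by have [s2 -> _] := greedy_ext k F l2 (rcons acc U); rewrite mem_cat mem_rcons inE eqxx.
Qed.
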